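(* Let $n\ge 1$ and let $P$ be the $n\times n$ permutation matrix of a permutation $\sigma\in S_n$. Then $P$ is the leaf matrix of at least one CNM of size $n$ if and only if $\sigma$ is irreducible.
   Context: A complete non-ambiguous matrix (CNM) of size $n$ is an $n\times n$ matrix $M=(m_{i,j})$ with entries in $\{0,1\}$ whose support $T=\{(i,j): m_{i,j}=1\}$ (whose elements are called vertices) satisfies: (1) $(1,1)\in T$; (2) for every $p=(i,j)\in T$ with $p\neq(1,1)$, exactly one of the following holds: there is $(i',j)\in T$ with $i'<i$, or there is $(i,j')\in T$ with $j'<j$; (3) every row and every column of $M$ contains at least one vertex; (4) define the parent of $p=(i,j)\neq(1,1)$ to be $(i',j)$ with $i'<i$ maximal if such a vertex exists, and otherwise $(i,j')$ with $j'<j$ maximal; then every vertex is the parent of either zero or exactly two vertices. A vertex with no children is a leaf. The leaf matrix $p(M)$ is obtained from $M$ by replacing all non-leaf vertices by $0$ (it is a permutation matrix). A permutation $\sigma\in S_n$ is irreducible if there is no $j$ with $1\le j<n$ such that $\sigma(\{1,\dots,j\})=\{1,\dots,j\}$; the permutation matrix of $\sigma$ has its $1$'s at positions $(i,\sigma(i))$. *)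

(* Defs.v *)
(* Indices are 0-based: row/column k of the paper is the
   ordinal k-1 : 'I_n. A {0,1}-matrix is represented as a bool matrix. *)
From mathcomp Require Import all_boot all_order all_algebra all_fingroup.
Set Implicit Arguments. Unset Strict Implicit. Unset Printing Implicit Defensive.

Section CNM.
Variable n : nat.
Implicit Types (M : 'M[bool]_n) (p q : 'I_n * 'I_n).

Definition vertex M p : bool := M p.1 p.2.

Definition is_origin p : bool := (val p.1 == 0%N) && (val p.2 == 0%N).

Definition has_above M p : bool := [exists i' : 'I_n, (i' < p.1) && M i' p.2].
Definition has_left M p : bool := [exists j' : 'I_n, (j' < p.2) && M p.1 j'].

Definition parent_of M q p : bool :=
  [&& vertex M p, vertex M q, ~~ is_origin p &
   if has_above M p then
     [&& q.2 == p.2, q.1 < p.1 &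
         [forall k : 'I_n, (q.1 < k < p.1) ==> ~~ M k p.2]]
   else
     [&& q.1 == p.1, q.2 < p.2 &
         [forall k : 'I_n, (q.2 < k < p.2) ==> ~~ M p.1 k]]].

Definition children M q : {set 'I_n * 'I_n} := [set p | parent_of M q p].

Definition is_CNM M : Prop :=
  (exists p, is_origin p && vertex M p) /\
  (* (2) *) (forall p, vertex M p -> ~~ is_origin p ->
               has_above M p (+) has_left M p) /\
  (forall i : 'I_n, exists j : 'I_n, M i j) /\
            (forall j : 'I_n, exists i : 'I_n, M i j) /\
  (forall q, vertex M q -> #|children M q| = 0%N \/ #|children M q| = 2%N).

Definition is_leaf M p : bool := vertex M p && (#|children M p| == 0%N).

Definition leaf_matrix M : 'M[bool]_n := \matrix_(i, j) is_leaf M (i, j).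

Definition perm_bmx (s : 'S_n) : 'M[bool]_n := \matrix_(i, j) (s i == j).

Definition irreducible_perm (s : 'S_n) : Prop :=
  ~ exists j : nat, [/\ (1 <= j)%N, (j < n)%N &
      s @: [set i : 'I_n | (i < j)%N] = [set i : 'I_n | (i < j)%N]].
End CNM.

(* Main.v *)
Require Import Defs.
From mathcomp Require Import all_boot all_order all_algebra all_fingroup.
From mathcomp Require Import zify.
Set Implicit Arguments. Unset Strict Implicit. Unset Printing Implicit Defensive.

Section Gen.
Variable n : nat.
Implicit Types (M : 'M[bool]_n) (p q : 'I_n * 'I_n).

Lemma child_cases M q p : p \in children M q ->
  [/\ vertex M p, vertex M q, ~~ is_origin p &
  (has_above M p /\ [/\ q.2 = p.2, q.1 < p.1 & (forall k : 'I_n, q.1 < k < p.1 -> ~~ M k p.2)]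
  \/ ~~ has_above M p /\ [/\ q.1 = p.1, q.2 < p.2 & (forall k : 'I_n, q.2 < k < p.2 -> ~~ M p.1 k)])].
Proof.
rewrite inE /parent_of => /and4P [vp vq no H]; split => //.
move: H; case: ifP => ha /and3P [/eqP e lt /forallP F].
- by left; split => //; split => // k hk; have := F k; rewrite hk.
- right; split; first by [].
  by split => // k hk; have := F k; rewrite hk.
Qed.

Lemma child_above_uniq M q p1 p2 : p1 \in children M q -> p2 \in children M q ->
  has_above M p1 -> has_above M p2 -> p1 = p2.
Proof.
move=> /child_cases [v1 _ _ [[_ [e1 l1 F1]]|[/negP //]]].
move=> /child_cases [v2 _ _ [[_ [e2 l2 F2]]|[/negP //]]] _ _.
move: p1 p2 v1 v2 e1 e2 l1 l2 F1 F2 => [a1 b1] [a2 b2] /= v1 v2 e1 e2 l1 l2 F1 F2.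
subst b1 b2; rewrite /vertex /= in v1 v2.
case: (ltngtP a1 a2) => h.
- by have := F2 a1; rewrite l1 h v1 => /(_ isT).
- by have := F1 a2; rewrite l2 h v2 => /(_ isT).
- by rewrite (val_inj h).
Qed.

Lemma child_left_uniq M q p1 p2 : p1 \in children M q -> p2 \in children M q ->
  ~~ has_above M p1 -> ~~ has_above M p2 -> p1 = p2.
Proof.
move=> C1 C2 n1 n2.
case/child_cases: C1 => v1 _ _ [[h _]|[_ [e1 l1 F1]]]; first by rewrite h in n1.
case/child_cases: C2 => v2 _ _ [[h _]|[_ [e2 l2 F2]]]; first by rewrite h in n2.
clear n1 n2.
move: p1 p2 v1 v2 e1 e2 l1 l2 F1 F2 => [a1 b1] [a2 b2] /= v1 v2 e1 e2 l1 l2 F1 F2.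
subst a1 a2; rewrite /vertex /= in v1 v2.
case: (ltngtP b1 b2) => h.
- by have := F2 b1; rewrite l1 h v1 => /(_ isT).
- by have := F1 b2; rewrite l2 h v2 => /(_ isT).
- by rewrite (val_inj h).
Qed.


Lemma card_ch_row M q : (forall k : 'I_n, q.2 < k -> ~~ M q.1 k) -> #|children M q| <= 1.
Proof.
move=> H; apply/card_le1_eqP => p1 p2 C1 C2.
have hA : forall p, p \in children M q -> has_above M p.
  move=> p C; case/child_cases: (C) => vp _ _ [[h _]|[_ [e l _]]] //.
  by move: vp; rewrite /vertex -e => vp; have := H _ l; rewrite vp.
by apply: (child_above_uniq C2 C1); apply: hA.
Qed.

Lemma card_ch_col M q : (forall k : 'I_n, q.1 < k -> ~~ M k q.2) -> #|children M q| <= 1.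
Proof.
move=> H; apply/card_le1_eqP => p1 p2 C1 C2.
have hA : forall p, p \in children M q -> ~~ has_above M p.
  move=> p C; case/child_cases: (C) => vp _ _ [[_ [e l _]]|[h _]] //.
  by move: vp; rewrite /vertex -e => vp; have := H _ l; rewrite vp.
by apply: (child_left_uniq C2 C1); apply: hA.
Qed.

Lemma leaf_of M (s : 'S_n) q : is_CNM M -> leaf_matrix M = perm_bmx s ->
  vertex M q -> #|children M q| <= 1 -> s q.1 = q.2.
Proof.
move=> [_ [_ [_ [_ H4]]]] hL vq c1.
have c0 : #|children M q| = 0 by case: (H4 q vq) => // e; rewrite e in c1.
have : leaf_matrix M q.1 q.2 by rewrite mxE /is_leaf -surjective_pairing vq c0.
by rewrite hL mxE => /eqP.
Qed.

Lemma row_bound M (s : 'S_n) i c : is_CNM M -> leaf_matrix M = perm_bmx s ->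
  M i c -> c <= s i.
Proof.
move=> hC hL hM.
case: (@arg_maxnP _ c (fun k => M i k) (fun k : 'I_n => val k) hM) => c' Mc' Hmax.
have := @leaf_of M s (i, c') hC hL Mc'.
rewrite /= => ->; first exact: Hmax.
apply: card_ch_row => k /= lt; apply/negP => Mk.
by have := Hmax k Mk; rewrite /= leqNgt lt.
Qed.

Lemma col_bound M (s : 'S_n) i c : is_CNM M -> leaf_matrix M = perm_bmx s ->
  M i c -> i <= (s^-1)%g c.
Proof.
move=> hC hL hM.
case: (@arg_maxnP _ i (fun k => M k c) (fun k : 'I_n => val k) hM) => r Mr Hmax.
have cb : #|children M (r, c)| <= 1.
  apply: card_ch_col => k /= lt; apply/negP => Mk.
  by have := Hmax k Mk; rewrite /= leqNgt lt.
have e : s r = c := @leaf_of M s (r, c) hC hL Mr cb.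
have -> : (s^-1)%g c = r by rewrite -e /= permK.
exact: Hmax.
Qed.

End Gen.

Lemma dir1 n (s : 'S_n) M : is_CNM M -> leaf_matrix M = perm_bmx s -> irreducible_perm s.
Proof.
move=> hC hL; have [_ [H2 [H3 _]]] := hC.
move=> [j [j1 jn E]].
pose J : 'I_n := Ordinal jn.
have [c Mc] := H3 J.
case: (@arg_minnP _ c (fun k => M J k) (fun k : 'I_n => val k) Mc) => c0 Mc0 Hmin.
have hl : ~~ has_left M (J, c0).
  apply/negP; rewrite /has_left => /existsP [k /andP [lk Mk]].
  by have := Hmin k Mk; rewrite /= leqNgt lk.
have no : ~~ is_origin (J, c0) by rewrite /is_origin /= negb_and -lt0n j1.
have := H2 (J, c0) Mc0 no; rewrite (negbTE hl) addbF /has_above => /existsP [i' /andP [li' Mi']].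
have lt_i' : (s i' < j)%N.
  have : s i' \in s @: [set i : 'I_n | (i < j)%N] by apply: imset_f; rewrite inE.
  by rewrite E inE.
have lt_c0 : (c0 < j)%N.
  exact: leq_ltn_trans (row_bound hC hL Mi') lt_i'.
have : c0 \in s @: [set i : 'I_n | (i < j)%N] by rewrite E inE.
case/imsetP => k; rewrite inE => lk ek.
have := col_bound hC hL Mc0; rewrite ek permK /= => hjk.
by move: (leq_ltn_trans hjk lk); rewrite ltnn.
Qed.

Section Gen2.
Variables (n : nat) (s : 'S_n) (M : 'M[bool]_n).
Hypothesis X : forall p, vertex M p -> ~~ is_origin p -> has_above M p (+) has_left M p.
Hypothesis R1 : forall i c, M i c -> c <= s i.
Hypothesis R2 : forall i, M i (s i).
Hypothesis C1 : forall i c, M i c -> i <= (s^-1)%g c.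

Lemma ch_leaf i : #|children M (i, s i)| = 0.
Proof.
have -> : children M (i, s i) = set0; last exact: cards0.
apply/setP => p; rewrite in_set0; apply/negP => C.
case/child_cases: C => vp _ _ [[_ [e l _]]|[_ [e l _]]]; move: vp; rewrite /vertex /=.
- rewrite -e /= => /C1; rewrite permK => h.
  by move: (leq_ltn_trans h l); rewrite ltnn.
- rewrite -e /= => /R1 h.
  by move: (leq_ltn_trans h l); rewrite ltnn.
Qed.

Lemma ch_int i c : M i c -> s i != c -> #|children M (i, c)| = 2.
Proof.
move=> Mic ne.
have lc : c < s i by rewrite ltn_neqAle R1 // andbT; apply: contra ne => /eqP h; apply/eqP/val_inj.
have li : i < (s^-1)%g c.
  rewrite ltn_neqAle C1 // andbT; apply: contra ne => /eqP h.
  by apply/eqP; rewrite (val_inj h) permKV.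
have P1 : (i < (s^-1)%g c) && M ((s^-1)%g c) c by rewrite li /=; have := R2 ((s^-1)%g c); rewrite permKV.
have P2 : (c < s i) && M i (s i) by rewrite lc R2.
case: (@arg_minnP _ _ (fun k : 'I_n => (i < k) && M k c) (fun k : 'I_n => val k) P1) => r /andP [ir Mr] Hr.
case: (@arg_minnP _ _ (fun k : 'I_n => (c < k) && M i k) (fun k : 'I_n => val k) P2) => d /andP [cd Md] Hd.
have C1' : (r, c) \in children M (i, c).
  rewrite inE /parent_of /vertex /= Mr Mic /is_origin /=.
  have -> : has_above M (r, c) by apply/existsP; exists i; rewrite ir Mic.
  rewrite eqxx ir /=; apply/andP; split.
    by rewrite negb_and -lt0n (leq_ltn_trans _ ir).
  apply/forallP => k; apply/implyP => /andP [ik kr]; apply/negP => Mk.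
  by have := Hr k; rewrite ik Mk /= leqNgt kr => /(_ isT).
have C2' : (i, d) \in children M (i, c).
  rewrite inE /parent_of /vertex /= Md Mic /is_origin /=.
  have hl : has_left M (i, d) by apply/existsP; exists c; rewrite cd Mic.
  have no : ~~ is_origin (i, d) by rewrite /is_origin negb_and /= orbC -lt0n (leq_ltn_trans _ cd).
  have := @X (i, d) Md no; rewrite hl addbT => /negbTE ->.
  rewrite eqxx cd /=; apply/andP; split; first by move: no; rewrite /is_origin.
  apply/forallP => k; apply/implyP => /andP [ck kd]; apply/negP => Mk.
  by have := Hd k; rewrite ck Mk /= leqNgt kd => /(_ isT).
have -> : children M (i, c) = [set (r, c); (i, d)].
  apply/setP => p; rewrite in_set2; apply/idP/idP; last first.
    by case/orP => /eqP ->.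
  move=> C; case/child_cases: (C) => vp _ _ [[ha _]|[ha _]].
  - by rewrite (child_above_uniq C C1') ?eqxx //; apply/existsP; exists i; rewrite ir Mic.
  - rewrite (child_left_uniq C C2') ?eqxx ?orbT //.
    have hl : has_left M (i, d) by apply/existsP; exists c; rewrite cd Mic.
    have no : ~~ is_origin (i, d) by rewrite /is_origin negb_and /= orbC -lt0n (leq_ltn_trans _ cd).
    by have := @X (i, d) Md no; rewrite hl addbT.
rewrite cards2; case: eqP => // [[e _]].
by move: ir; rewrite e ltnn.
Qed.

Lemma gen_CNM (hn : 0 < n) : M (Ordinal hn) (Ordinal hn) ->
  is_CNM M /\ leaf_matrix M = perm_bmx s.
Proof.
move=> M00; split.
  split; first by exists (Ordinal hn, Ordinal hn); rewrite /is_origin /vertex /= M00.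
  split; first exact: X.
  split; first by move=> i; exists (s i); exact: R2.
  split; first by move=> j; exists ((s^-1)%g j); have := R2 ((s^-1)%g j); rewrite permKV.
  move=> [i c]; rewrite /vertex /= => Mic.
  case: (eqVneq (s i) c) => [<-|ne]; first by left; exact: ch_leaf.
  by right; exact: ch_int.
apply/matrixP => i c; rewrite !mxE /is_leaf /vertex /=.
case: (eqVneq (s i) c) => [<-|ne]; first by rewrite R2 ch_leaf.
by case Mic: (M i c) => //=; rewrite ch_int.
Qed.

End Gen2.

Lemma card_lt n m (hm : m <= n) : #|[set k : 'I_n | k < m]| = m.
Proof.
have -> : [set k : 'I_n | k < m] = [set widen_ord hm k | k : 'I_m].
  apply/setP => x; rewrite inE; apply/idP/imsetP.
    by move=> xm; exists (Ordinal xm) => //; apply: val_inj.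
  by case=> k _ ->; rewrite /= ltn_ord.
by rewrite card_imset ?card_ord // => x y /(congr1 val) /= e; apply: val_inj.
Qed.

Lemma inj_bound n (f : 'I_n -> 'I_n) (injf : injective f) a b : a <= n -> b <= n ->
  (forall k : 'I_n, k < a -> f k < b) -> a <= b.
Proof.
move=> ha hb H; rewrite -(card_lt ha) -(card_lt hb) -(card_imset _ injf).
apply: subset_leq_card; apply/subsetP => x /imsetP [k]; rewrite inE => hk ->.
by rewrite inE; exact: H.
Qed.

Section Constr.
Variables (n : nat) (s : 'S_n).
Hypothesis irr : irreducible_perm s.

Definition colTop (i c : 'I_n) := (c <= s i) && [forall k : 'I_n, (k < i) ==> (s k < c)].
Definition LRmax (i : 'I_n) := [forall k : 'I_n, (k < i) ==> (s k < s i)].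
Definition rowLeft (i c : 'I_n) := if LRmax i then (i <= (s^-1)%g c) && [forall k : 'I_n, (i <= k) ==> (c <= s k)]
  else (s i == c).
Definition Mc : 'M[bool]_n := \matrix_(i, c) (colTop i c || rowLeft i c).

Lemma McE i c : Mc i c = colTop i c || rowLeft i c.
Proof. by rewrite mxE. Qed.

Lemma colTop_LR i c : colTop i c -> LRmax i.
Proof.
case/andP => h1 /forallP h2; apply/forallP => k; apply/implyP => lk.
by have := h2 k; rewrite lk /= => /leq_trans; apply.
Qed.

Lemma cR1 i c : Mc i c -> c <= s i.
Proof.
rewrite McE => /orP [/andP [] //|]; rewrite /rowLeft; case: ifP => _.
  by case/andP => _ /forallP /(_ i); rewrite leqnn.
by move/eqP ->.
Qed.

Lemma cR2 i : Mc i (s i).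
Proof.
rewrite McE /rowLeft; case: ifP => h; last by rewrite eqxx orbT.
by rewrite /colTop leqnn; move: h; rewrite /LRmax => ->.
Qed.

Lemma cC1 i c : Mc i c -> i <= (s^-1)%g c.
Proof.
rewrite McE => /orP [/andP [_ /forallP h]|]; last first.
  rewrite /rowLeft; case: ifP => _; first by case/andP.
  by move/eqP <-; rewrite permK.
rewrite leqNgt; apply/negP => lt.
by have := h ((s^-1)%g c); rewrite lt permKV ltnn.
Qed.

Lemma cA1 i c : colTop i c -> ~~ has_above Mc (i, c).
Proof.
case/andP => _ /forallP h; apply/negP => /existsP [k /andP [lk Mk]].
have := h k; rewrite lk /= => h'.
by have := leq_trans h' (cR1 Mk); rewrite ltnn.
Qed.

Lemma cA2 i c : Mc i c -> ~~ colTop i c -> has_above Mc (i, c).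
Proof.
move=> Mic nt.
have P : c <= s i := cR1 Mic.
case: (@arg_minnP _ _ (fun k : 'I_n => c <= s k) (fun k : 'I_n => val k) P) => t ct Ht.
have tc : colTop t c.
  rewrite /colTop ct; apply/forallP => k; apply/implyP => kt.
  by rewrite ltnNge; apply/negP => /Ht; rewrite leqNgt kt.
apply/existsP; exists t; rewrite McE tc /= andbT.
rewrite ltn_neqAle Ht // andbT; apply/negP => /eqP e.
by move: nt; rewrite -(val_inj e) tc.
Qed.

Lemma cB1 i c : rowLeft i c -> ~~ has_left Mc (i, c).
Proof.
move=> rl; apply/negP => /existsP [k /andP [kc Mk]]; move: rl kc Mk.
rewrite /rowLeft; case: ifP => lr.
  case/andP => _ /forallP h kc /cC1 ik.
  by have := h ((s^-1)%g k); rewrite ik permKV /= leqNgt kc.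
move/eqP => <- ks; rewrite McE => /orP [ct|].
  by move: (colTop_LR ct); rewrite lr.
by rewrite /rowLeft lr => /eqP e; move: ks; rewrite e ltnn.
Qed.

Lemma cB2 i c : Mc i c -> ~~ rowLeft i c -> has_left Mc (i, c).
Proof.
move=> Mic nr.
have ct : colTop i c by move: Mic nr; rewrite McE; case: (colTop i c) => //= ->.
have lr := colTop_LR ct.
move: nr; rewrite /rowLeft lr (cC1 Mic) /= negb_forall => /existsP [k0].
rewrite negb_imply -ltnNge => /andP [ik0 k0c].
case: (@arg_minnP _ _ (fun k : 'I_n => i <= k) (fun k : 'I_n => val (s k)) ik0) => m im Hm.
apply/existsP; exists (s m); rewrite (leq_ltn_trans (Hm _ ik0) k0c) /=.
rewrite McE /rowLeft lr permK im /=; apply/orP; right.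
by apply/forallP => k; apply/implyP => /Hm.
Qed.

Lemma cOrig i c : colTop i c -> rowLeft i c -> is_origin (i, c).
Proof.
move=> ct; have lr := colTop_LR ct.
rewrite /rowLeft lr => /andP [hr1 /forallP hr2].
case/andP: ct => hc1 /forallP hc2.
have n0 : 0 < n by apply: leq_ltn_trans (ltn_ord i).
pose z : 'I_n := Ordinal n0.
rewrite /is_origin /=.
case: (posnP i) => [i0|ipos].
  apply/andP; split => //.
  have := hr2 ((s^-1)%g z); rewrite permKV /= => /implyP h.
  by rewrite -leqn0; apply: h; rewrite i0.
have ic : i <= c.
  apply: (inj_bound (@perm_inj _ s)) => //; first exact: ltnW (ltn_ord i).
    exact: ltnW (ltn_ord c).
  by move=> k lk; have := hc2 k; rewrite lk.
have ci : c <= i.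
  apply: (inj_bound (@perm_inj _ (s^-1)%g)) => //; first exact: ltnW (ltn_ord c).
    exact: ltnW (ltn_ord i).
  move=> k lk; rewrite ltnNge; apply/negP => h.
  by have := hr2 ((s^-1)%g k); rewrite h permKV /= leqNgt lk.
have eic : c = i :> nat by apply/eqP; rewrite eqn_leq ci ic.
exfalso; apply: irr; exists i; split => //.
apply/eqP; rewrite eqEcard card_imset; last exact: perm_inj.
rewrite leqnn andbT; apply/subsetP => x /imsetP [k]; rewrite !inE => lk ->.
by have := hc2 k; rewrite lk -eic.
Qed.

Lemma cX p : vertex Mc p -> ~~ is_origin p -> has_above Mc p (+) has_left Mc p.
Proof.
case: p => i c; rewrite /vertex /= => Mic no.
case ct: (colTop i c).
  have nr : ~~ rowLeft i c by apply/negP => /(cOrig ct); apply/negP.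
  by rewrite (negbTE (cA1 ct)) (cB2 Mic nr).
have rl : rowLeft i c by move: Mic; rewrite McE ct.
by rewrite (cA2 Mic (negbT ct)) (negbTE (cB1 rl)).
Qed.

Lemma cM00 (hn : 0 < n) : Mc (Ordinal hn) (Ordinal hn).
Proof.
rewrite McE /colTop leq0n /=; apply/orP; left.
by apply/forallP.
Qed.

End Constr.

Unset Implicit Arguments.

Theorem theorem3p1 (n : nat) (hn : (1 <= n)%N) (s : 'S_n) :
  (exists M : 'M[bool]_n, is_CNM M /\ leaf_matrix M = perm_bmx s)
  <-> irreducible_perm s.
Proof.
split.
  by case=> M [hC hL]; exact: dir1 hC hL.
move=> irr; exists (Mc s).
apply: gen_CNM.
- exact: cX.
- exact: cR1.
- exact: cR2.
- exact: cC1.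
- exact: cM00.
Qed.
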